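(* Let $G=B(m;R,S,T)$ be a connected bicirculant of degree $d=|R|+|S|\ge 4$ with $|R|,|T|\ge 3$. Let $a\in R$ and $b\in T$ with $a,b\ne m/2$, and let $H$ be the spanning subgraph of $G$ obtained by removing all edges $u_iu_{i\pm a}$ and $v_iv_{i\pm b}$, i.e. $H=B(m;R\setminus\{a,-a\},S,T\setminus\{b,-b\})$. If every connected component of $H$ contains a hamilton cycle having at least two outer edges, then $G$ is hamiltonian.
   Context: For an integer $m\ge 1$ and subsets $R,S,T\subseteq\mathbb{Z}_m$ with $R=-R$, $T=-T$, $0\notin R\cup T$, $0\in S$ and $|R|=|T|$, the bicirculant $B(m;R,S,T)$ is the graph with vertex set $\{u_0,\dots,u_{m-1}\}\cup\{v_0,\dots,v_{m-1}\}$ and edge set $\{u_iu_{i+j}: i\in\mathbb{Z}_m, j\in R\}\cup\{v_iv_{i+j}: i\in\mathbb{Z}_m, j\in T\}\cup\{u_iv_{i+j}: i\in\mathbb{Z}_m, j\in S\}$ (indices mod $m$). Outer edges are those of the form $u_iu_{i+j}$ ($j\in R$). *)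

(* Defs.v *)
From HB Require Import structures.
From mathcomp Require Import all_boot all_order all_algebra.
Set Implicit Arguments. Unset Strict Implicit. Unset Printing Implicit Defensive.
Import GRing.Theory.
Local Open Scope ring_scope.

(* Vertices of a bicirculant on Z_m: inl i = u_i, inr i = v_i. *)
Definition vtx (m : nat) : finType := ('Z_m + 'Z_m)%type.

Definition bicirc_adj (m : nat) (R S T : {set 'Z_m}) : rel (vtx m) :=
  fun x y =>
    match x, y with
    | inl i, inl j => (j - i) \in R
    | inr i, inr j => (j - i) \in T
    | inl i, inr j => (j - i) \in S
    | inr i, inl j => (i - j) \in S
    end.

Definition bicirc_params (m : nat) (R S T : {set 'Z_m}) : Prop :=
  [/\ R = [set - x | x in R], T = [set - x | x in T],
      0 \notin R /\ 0 \notin T, 0 \in S & #|R| = #|T|].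

Definition outer_edge (m : nat) (p : vtx m * vtx m) : bool :=
  match p with (inl _, inl _) => true | _ => false end.

Definition cycle_edges (V : finType) (c : seq V) : seq (V * V) := zip c (rot 1 c).

Definition ham_cycle_on (V : finType) (e : rel V) (C : {set V}) (c : seq V) : Prop :=
  [/\ uniq c, (3 <= size c)%N, cycle e c & [set x in c] = C].

Definition hamiltonian (V : finType) (e : rel V) : Prop :=
  exists c : seq V, ham_cycle_on e [set: V] c.

Definition connected_graph (V : finType) (e : rel V) : Prop :=
  forall x y : V, connect e x y.

Definition component (V : finType) (e : rel V) (x : V) : {set V} :=
  [set y | connect e x y].

(* Main.v *)
Require Import Defs.
From mathcomp Require Import all_boot all_order all_algebra.
From mathcomp Require Import perm zify ring.
Set Implicit Arguments. Unset Strict Implicit. Unset Printing Implicit Defensive.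

Section Generic.
Variable T : finType.

Lemma closed_connect (f : T -> T) (P : pred T) a b :
  (forall w, P w -> P (f w)) -> P a -> fconnect f a b -> P b.
Proof.
move=> HP Pa /connectP [p pth ->]; elim: p a Pa pth => [|v p IH] a Pa //=.
by case/andP=> /eqP <- pth; apply: IH => //; apply: HP.
Qed.

Lemma agree_connect (f g : T -> T) (P : pred T) a b :
  (forall w, P w -> g w = f w) -> (forall w, P w -> P (f w)) -> P a ->
  fconnect f a b -> fconnect g a b.
Proof.
move=> Hg HP Pa /connectP [p pth ->]; apply/connectP; exists p => //.
elim: p a Pa pth => [|v p IH] a Pa //=.
case/andP=> /eqP <- pth; rewrite Hg // eqxx /=; apply: IH => //; exact: HP.
Qed.

Lemma splice (f g : T -> T) (x0 : T) (P : pred T) z :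
  (forall w, w != x0 -> P w -> g w = f w) ->
  (forall w, fconnect f (f x0) w -> P w) ->
  fconnect f (f x0) z -> fconnect g (f x0) z.
Proof.
move=> Hg HP /connectP [p pth ->].
case/shortenP: pth => q pth' uq _; apply/connectP; exists q => //.
have allP : forall w, w \in f x0 :: q -> P w.
  by move=> w /(path_connect pth') /HP.
move: uq => /= /andP [hnp _].
suff gen : forall r u, path (frel f) u r -> f x0 \notin r ->
    (forall w, w \in u :: r -> P w) -> path (frel g) u r.
  exact: gen.
elim=> [|v r IH] u //=.
case/andP=> /eqP fuv pth hn allu.
have ux : u != x0.
  by apply/eqP=> ux; move: hn; rewrite -fuv ux inE eqxx.
rewrite Hg ?fuv ?eqxx //=; last by apply: allu; rewrite mem_head.
apply: IH => //.
  by move: hn; rewrite inE negb_or => /andP [].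
by move=> w wi; apply: allu; rewrite inE wi orbT.
Qed.

End Generic.

Section Merge.
Variables (V : finType) (e : rel V) (k : nat) (pos : V -> nat) (s0 : {perm V})
  (x y : nat -> V).
Hypotheses
 (Hk : 0 < k)
 (Hpos : forall z, pos z < k)
 (Hs0e : forall z, e z (s0 z))
 (Hs0pos : forall z, pos (s0 z) = pos z)
 (Hfib : forall z w, pos z = pos w -> fconnect s0 z w)
 (Hx : forall i, i.+1 < k -> pos (x i) = i)
 (Hy : forall i, i.+1 < k -> pos (y i) = i.+1)
 (Hxy : forall i, i.+1 < k -> e (x i) (s0 (y i)) /\ e (y i) (s0 (x i)))
 (Hd : forall i, i.+2 < k -> x i.+1 != y i).

Fixpoint sig (i : nat) : {perm V} :=
  if i is j.+1 then tperm (x j) (y j) * sig j else s0.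

Lemma sig_inv i : i < k ->
  [/\ forall z, i <= pos z -> (i == 0) || (z != y i.-1) -> sig i z = s0 z,
      forall z w, pos z <= i -> pos w <= i -> fconnect (sig i) z w &
      forall z, e z (sig i z)].
Proof.
elim: i => [|i IH] Hi.
  split => //= z w; rewrite !leqn0 => /eqP h1 /eqP h2; apply: Hfib; lia.
have [HA HB HE] := IH (ltnW Hi).
have Hxi := Hx Hi; have Hyi := Hy Hi; have [E1 E2] := Hxy Hi.
have yprev : forall z, pos z != i -> (i == 0) || (z != y i.-1).
  move=> z; case: (i) Hi => [//|j] Hj pz /=.
  by apply/eqP => h; move: pz; rewrite h Hy ?eqxx //; lia.
have xprev : (i == 0) || (x i != y i.-1).
  by case: (i) Hi => //= j Hj; rewrite eq_sym; apply: Hd.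
have sx : sig i (x i) = s0 (x i).
  by apply: HA => //; rewrite Hxi.
have sy : sig i (y i) = s0 (y i).
  by apply: HA; [rewrite Hyi | apply: yprev; rewrite Hyi; lia].
have xy : x i != y i by apply/eqP => h; move: Hxi; rewrite h Hyi; lia.
have sigS z : sig i.+1 z = sig i (tperm (x i) (y i) z) by rewrite /= permM.
have Ey : forall w, fconnect (sig i) (y i) w -> pos w = i.+1.
  move=> w cw; apply/eqP.
  apply: (closed_connect (f := sig i) (P := fun w => pos w == i.+1)) cw; last by rewrite Hyi.
  move=> u /eqP pu; rewrite HA; first by rewrite Hs0pos pu.
    by rewrite pu.
  by apply: yprev; rewrite pu; lia.
split.
- move=> z pz /orP [//|zy]; rewrite sigS tpermD; first last.
  + by rewrite eq_sym.
  + by apply/eqP => h; move: pz; rewrite -h Hxi; lia.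
  rewrite HA //; first lia.
  by apply: yprev; lia.
-
  have key : forall z, pos z <= i.+1 -> fconnect (sig i.+1) (y i) z.
    move=> z pz.
    have step1 : sig i.+1 (y i) = sig i (x i) by rewrite sigS tpermR.
    have step2 : sig i.+1 (x i) = sig i (y i) by rewrite sigS tpermL.
    have O : forall w, pos w <= i -> fconnect (sig i.+1) (sig i (x i)) w.
      move=> w pw.
      apply: (splice (P := fun w => w != y i)).
      + move=> u ux uy; rewrite sigS tpermD // eq_sym //.
      + move=> u cu; apply/eqP => uy.
        have : fconnect (sig i) (x i) (y i).
          by apply: connect_trans (connect1 _) _; [exact: eqxx| rewrite -uy].
        rewrite fconnect_sym; last exact: perm_inj.
        by move/Ey; lia.
      + apply: connect_trans (HB (x i) w _ pw); last by rewrite Hxi.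
        rewrite fconnect_sym; last exact: perm_inj.
        exact: fconnect1.
    have Oxi : fconnect (sig i.+1) (y i) (x i).
      by apply: connect_trans (fconnect1 _ (y i)) _; rewrite step1; apply: O; rewrite Hxi.
    case: (ltnP (pos z) i.+1) => pz'.
      by apply: connect_trans (fconnect1 _ (y i)) _; rewrite step1; apply: O; lia.
    have pzi : pos z = i.+1 by lia.
    apply: (connect_trans Oxi); apply: (connect_trans (fconnect1 _ (x i))).
    rewrite step2 sy.
    apply: (splice (P := fun w => pos w == i.+1)).
    + move=> u uy /eqP pu; rewrite sigS tpermD; last by rewrite eq_sym.
        rewrite HA; first by [].
          by lia.
        by apply: yprev; lia.
      by apply/eqP => h; move: pu; rewrite -h Hxi; lia.
    + move=> u cu; apply: (closed_connect (P := fun w => pos w == i.+1)) cu.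
        by move=> v /eqP pv; rewrite Hs0pos pv.
      by rewrite Hs0pos Hyi.
    + by apply: Hfib; rewrite Hs0pos Hyi.
  move=> z w pz pw; apply: connect_trans (key w pw).
  rewrite fconnect_sym; [exact: key | exact: perm_inj].
- move=> z; rewrite sigS.
  case: (tpermP (x i) (y i) z) => [->|->|/eqP zx /eqP zy]; first by rewrite sy.
    by rewrite sx.
  exact: HE.
Qed.

Lemma merge_all : exists s : {perm V}, (forall z, e z (s z)) /\ (forall z w, fconnect s z w).
Proof.
have Hk1 : k.-1 < k by lia.
have [_ HB HE] := sig_inv Hk1.
exists (sig k.-1); split => // z w; apply: HB.
- by have := Hpos z; lia.
- by have := Hpos w; lia.
Qed.

End Merge.

Lemma zip_rot_next (T : eqType) (c : seq T) : uniq c ->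
  zip c (rot 1 c) = map (fun x => (x, next c x)) c.
Proof.
case: c => [|x0 c'] // U; rewrite rot1_cons.
apply: (eq_from_nth (x0 := (x0, x0))); first by rewrite size_zip size_rcons size_map /=; lia.
move=> i; rewrite size_zip size_rcons minnn => lti.
rewrite (nth_map x0) // nth_zip ?size_rcons // next_nth mem_nth // index_uniq //.
congr (_, _); rewrite nth_rcons; case: ltnP => // h.
by case: eqP => [->|]; rewrite ?nth_default //; lia.
Qed.

Lemma two_of_count (T : eqType) (s : seq T) (P : pred T) : uniq s -> (2 <= count P s)%N ->
  exists x1 x2, [/\ x1 \in s, x2 \in s, x1 != x2, P x1 & P x2].
Proof.
move=> U; rewrite -size_filter.
have Uf : uniq (filter P s) by rewrite filter_uniq.
case E: (filter P s) Uf => [|x1 [|x2 r]] //= /andP [nx _] _.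
have h1 : x1 \in filter P s by rewrite E mem_head.
have h2 : x2 \in filter P s by rewrite E !inE eqxx orbT.
move: h1 h2; rewrite !mem_filter => /andP [p1 m1] /andP [p2 m2].
exists x1, x2; split => //; apply: contra nx => /eqP ->; exact: mem_head.
Qed.

Lemma count_split (T : Type) (P Q : pred T) l :
  (count (fun x => P x && Q x) l + count (fun x => P x && ~~ Q x) l = count P l)%N.
Proof. elim: l => [|x l IH] //=; case: (P x); case: (Q x) => /=; lia. Qed.

Import GRing.Theory.
Local Open Scope ring_scope.

Section NT.
Variables (Z : comRingType) (L : pred Z) (N : nat) (a b : Z).
Hypotheses (HN : forall x : Z, x *+ N = 0) (HN0 : (0 < N)%N)
  (L0 : L 0) (LB : forall x y, L x -> L y -> L (x - y))
  (Hspan : forall x, exists n1 n2, L (x - (a *+ n1 + b *+ n2))).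

Lemma LN x : L x -> L (- x).
Proof. by move=> Lx; rewrite -sub0r; apply: LB. Qed.
Lemma LD x y : L x -> L y -> L (x + y).
Proof. by move=> Lx Ly; rewrite -[y]opprK; apply: LB => //; apply: LN. Qed.
Lemma LMn x n : L x -> L (x *+ n).
Proof. by move=> Lx; elim: n => [|n IH]; rewrite ?mulr0n // mulrS LD. Qed.
Lemma Ltrans x y z : L (x - y) -> L (y - z) -> L (x - z).
Proof. by move=> h1 h2; have := LD h1 h2; rewrite addrA subrK. Qed.
Lemma Lsym x y : L (x - y) -> L (y - x).
Proof. by move/LN; rewrite opprB. Qed.

Lemma mulrn_modN (x : Z) n : x *+ n = x *+ (n %% N).
Proof. by rewrite {1}(divn_eq n N) mulrnDr mulnC mulrnA HN mul0rn add0r. Qed.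

Lemma oppr_mulrn (x : Z) n : - (x *+ n) = x *+ (n * N.-1).
Proof.
have h : x *+ n + x *+ (n * N.-1) = 0.
  by rewrite -mulrnDr -mulnS prednK // mulrnA HN.
by rewrite -(addKr (x *+ n) (x *+ (n * N.-1))) h addr0.
Qed.

Definition Pa n := (0 < n)%N && L (a *+ n).
Lemma exPa : exists n, Pa n.
Proof. by exists N; rewrite /Pa HN0 HN. Qed.
Definition na := ex_minn exPa.

Lemma na_spec : [/\ (0 < na)%N, L (a *+ na) & forall d, (0 < d < na)%N -> ~~ L (a *+ d)].
Proof.
rewrite /na; case: ex_minnP => n /andP [n0 Ln] Hmin; split => // d /andP [d0 dn].
by apply/negP => Ld; have := Hmin d; rewrite /Pa d0 Ld => /(_ isT); lia.
Qed.

Definition Mb (x : Z) := [exists j : 'I_N, L (x - a *+ j)].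
Lemma Mb_intro x j1 j2 : L (x - a *+ j1 + a *+ j2) -> Mb x.
Proof.
move=> h; apply/existsP.
have ltm : ((j1 + j2 * N.-1) %% N < N)%N by rewrite ltn_mod.
exists (Ordinal ltm) => /=.
by rewrite -mulrn_modN mulrnDr opprD -oppr_mulrn opprK addrA.
Qed.

Definition Pb n := (0 < n)%N && Mb (b *+ n).
Lemma exPb : exists n, Pb n.
Proof.
exists N; rewrite /Pb HN0 HN; apply: (@Mb_intro 0 0 0).
by rewrite mulr0n !subrr addr0.
Qed.
Definition qb := ex_minn exPb.

Lemma qb_spec : [/\ (0 < qb)%N, Mb (b *+ qb) & forall d, (0 < d < qb)%N -> ~~ Mb (b *+ d)].
Proof.
rewrite /qb; case: ex_minnP => n /andP [n0 Ln] Hmin; split => // d /andP [d0 dn].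
by apply/negP => Ld; have := Hmin d; rewrite /Pb d0 Ld => /(_ isT); lia.
Qed.

Definition col (i : nat) := if odd (i %/ na) then (na.-1 - i %% na)%N else (i %% na)%N.
Definition rep (i : nat) : Z := b *+ (i %/ na) + a *+ col i.
Definition kk := (qb * na)%N.

Lemma col_lt i : (col i < na)%N.
Proof.
have [n0 _ _] := na_spec; have := ltn_pmod i n0.
by rewrite /col; case: ifP => _; lia.
Qed.

Lemma a_inj j1 j2 : (j1 < na)%N -> (j2 < na)%N -> L (a *+ j1 - a *+ j2) -> j1 = j2.
Proof.
have [_ _ Hm] := na_spec.
wlog le12 : j1 j2 / (j2 <= j1)%N.
  move=> W h1 h2 hL; case: (leqP j2 j1) => h; first exact: W.
  by apply/esym/W => //; [lia | apply: Lsym].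
move=> h1 h2 hL; apply/eqP; rewrite eqn_leq le12 andbT leqNgt; apply/negP => lt.
by have := Hm (j1 - j2)%N; rewrite mulrnBr // hL; lia.
Qed.

Lemma rep_inj i1 i2 : (i1 < kk)%N -> (i2 < kk)%N -> L (rep i1 - rep i2) -> i1 = i2.
Proof.
have [n0 _ _] := na_spec; have [_ _ Hq] := qb_spec.
have rowlt i : (i < kk)%N -> (i %/ na < qb)%N by move=> h; rewrite ltn_divLR.
wlog le12 : i1 i2 / (i2 %/ na <= i1 %/ na)%N.
  move=> W h1 h2 hL; case: (leqP (i2 %/ na) (i1 %/ na)) => h; first exact: W.
  by apply/esym/W => //; [lia | apply: Lsym].
move=> h1 h2 hL.
have rows : (i1 %/ na = i2 %/ na)%N.
  apply/eqP; rewrite eqn_leq le12 andbT leqNgt; apply/negP => lt.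
  have := Hq (i1 %/ na - i2 %/ na)%N; rewrite subn_gt0 lt /=.
  have -> : (i1 %/ na - i2 %/ na < qb)%N by apply: leq_ltn_trans (leq_subr _ _) (rowlt _ h1).
  move=> /(_ isT) /negP; apply; apply: (@Mb_intro _ (col i2) (col i1)).
  move: hL; rewrite /rep.
  suff -> : b *+ (i1 %/ na) + a *+ col i1 - (b *+ (i2 %/ na) + a *+ col i2) =
            b *+ (i1 %/ na - i2 %/ na) - a *+ col i2 + a *+ col i1 by [].
  rewrite mulrnBr; last by lia.
  ring.
move: hL; rewrite /rep rows.
have -> : b *+ (i2 %/ na) + a *+ col i1 - (b *+ (i2 %/ na) + a *+ col i2) =
          a *+ col i1 - a *+ col i2 by ring.
move/(a_inj (col_lt _) (col_lt _)); rewrite /col -rows.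
have := ltn_pmod i1 n0; have := ltn_pmod i2 n0.
move=> m2 m1 hc; have hm : (i1 %% na = i2 %% na)%N by case: ifP hc => _; lia.
by rewrite (divn_eq i1 na) (divn_eq i2 na) rows hm.
Qed.

Lemma rep_cover x : exists i, (i < kk)%N /\ L (x - rep i).
Proof.
have [n0 La _] := na_spec; have [q0 Mq _] := qb_spec.
have [n1 [n2 h]] := Hspan x.
case/existsP: Mq => j0 hj0.
set r := (n2 %% qb)%N; set t := (n2 %/ qb)%N.
set n1' := (n1 + j0 * t)%N; set c' := (n1' %% na)%N.
have rlt : (r < qb)%N by rewrite ltn_mod.
have clt : (c' < na)%N by rewrite ltn_mod.
pose cc := if odd r then (na.-1 - c')%N else c'.
have cclt : (cc < na)%N by rewrite /cc; case: ifP => _; lia.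
exists (r * na + cc)%N; split.
  rewrite /kk; have : (r.+1 * na <= qb * na)%N by rewrite leq_mul2r rlt orbT.
  by rewrite mulSn; lia.
have hdiv : ((r * na + cc) %/ na = r)%N.
  by rewrite divnMDl // divn_small // addn0.
have hmod : ((r * na + cc) %% na = cc)%N.
  by rewrite modnMDl modn_small.
have -> : rep (r * na + cc) = b *+ r + a *+ c'.
  rewrite /rep /col hdiv hmod /cc; case: (odd r); congr (_ + a *+ _) => //; clearbody c'; lia.
apply: Ltrans h _; apply: (@Ltrans _ (b *+ r + a *+ n1')).
  have -> : a *+ n1 + b *+ n2 - (b *+ r + a *+ n1') = (b *+ qb - a *+ j0) *+ t.
    have hn2 : n2 = (t * qb + r)%N by rewrite /t /r -divn_eq.
    rewrite /n1' hn2.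
    rewrite mulrnBl mulrnDr -!mulrnA mulrnDr; ring.
  exact: LMn.
have -> : b *+ r + a *+ n1' - (b *+ r + a *+ c') = (a *+ na) *+ (n1' %/ na).
  rewrite {1}(divn_eq n1' na) -/c' mulrnDr -mulrnA mulnC; ring.
exact: LMn.
Qed.

Lemma rep_step i : (i.+1 < kk)%N ->
  ((na %| i.+1)%N -> rep i.+1 = rep i + b) /\
  (~~ (na %| i.+1)%N -> rep i.+1 = rep i + a \/ rep i.+1 = rep i - a).
Proof.
have [n0 _ _] := na_spec => _.
have hm := ltn_pmod i n0.
rewrite /rep /col divnS // modnS.
split=> hd; last first.
  rewrite (negbTE hd) add0n; case: ifP => _.
    right; have -> : (na.-1 - i %% na = (na.-1 - (i %% na).+1).+1)%N.
      have : ((i %% na).+1 != na)%N.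
        apply: contra hd => /eqP h; rewrite (divn_eq i na) -addnS h.
        by rewrite dvdn_add ?dvdn_mull ?dvdnn.
      lia.
    rewrite mulrS; ring.
  by left; rewrite mulrS; ring.
rewrite hd /=.
  have h : (na %| (i %% na).+1)%N.
    have e : (i.+1 = i %/ na * na + (i %% na).+1)%N by rewrite addnS -divn_eq.
    by move: hd; rewrite e dvdn_addr ?dvdn_mull ?dvdnn.
  have hc : (i %% na = na.-1)%N.
    have : (na <= (i %% na).+1)%N by apply: dvdn_leq.
    move: hm n0; generalize (i %% na)%N; lia.
  rewrite add1n add0n hc subnn; case: (odd (i %/ na)) => /=; rewrite ?subn0 mulrS; ring.
Qed.

End NT.

Section Basic.
Variable m : nat.
Local Notation V := (vtx m).

Definition idx (z : V) : 'Z_m := match z with inl x => x | inr x => x end.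
Definition shift (z : V) (s : 'Z_m) : V :=
  match z with inl x => inl (x + s) | inr x => inr (x + s) end.

Lemma shiftK s : cancel (shift^~ s) (shift^~ (- s)).
Proof. by case=> x /=; rewrite addrK. Qed.
Lemma shiftKN s : cancel (shift^~ (- s)) (shift^~ s).
Proof. by case=> x /=; rewrite subrK. Qed.
Lemma shift_inj s : injective (shift^~ s).
Proof. exact: can_inj (shiftK s). Qed.
Lemma idx_shift z s : idx (shift z s) = idx z + s.
Proof. by case: z. Qed.

Lemma adj_shift (R S T : {set 'Z_m}) z w s :
  bicirc_adj R S T (shift z s) (shift w s) = bicirc_adj R S T z w.
Proof.
have h (x y : 'Z_m) : (y + s) - (x + s) = y - x by rewrite opprD addrACA subrr addr0.
by case: z => x; case: w => y /=; rewrite h.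
Qed.

Lemma connect_shift (e : rel V) z w s :
  (forall z w, e (shift z s) (shift w s) = e z w) ->
  connect e z w -> connect e (shift z s) (shift w s).
Proof.
move=> He /connectP [p pth ->]; apply/connectP.
exists (map (fun x => shift x s) p); last by rewrite (last_map (fun x => shift x s) p z).
elim: p z pth => [|v p IH] z //= /andP [ev pv]; apply/andP; split; first by rewrite He.
exact: IH.
Qed.

Lemma adj_sym (R S T : {set 'Z_m}) :
  (forall x, x \in R -> - x \in R) -> (forall x, x \in T -> - x \in T) ->
  symmetric (bicirc_adj R S T).
Proof.
move=> HR HT.
have sy (X : {set 'Z_m}) (HX : forall x, x \in X -> - x \in X) (i j : 'Z_m) :
    (j - i \in X) = (i - j \in X).
  by apply/idP/idP => /HX; rewrite opprB.
by case=> i; case=> j //=; apply: sy.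
Qed.

End Basic.

Section Main.
Variables (m : nat) (R S T : {set 'Z_m}) (a b : 'Z_m).
Hypotheses (m1 : (1 < m)%N) (Hpar : bicirc_params R S T)
  (Hconn : connected_graph (bicirc_adj R S T)) (Ha : a \in R) (Hb : b \in T).
Local Notation V := (vtx m).
Local Notation G := (bicirc_adj R S T).
Let R' := R :\: [set a; - a].
Let T' := T :\: [set b; - b].
Local Notation H := (bicirc_adj R' S T').

Lemma neg_of (X : {set 'Z_m}) : X = [set - x | x in X] -> forall x, x \in X -> - x \in X.
Proof. by move=> hX x hx; rewrite hX; apply: imset_f. Qed.

Lemma HR x : x \in R -> - x \in R.
Proof. by case: Hpar => hR _ _ _ _; apply: neg_of. Qed.
Lemma HT x : x \in T -> - x \in T.
Proof. by case: Hpar => _ hT _ _ _; apply: neg_of. Qed.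
Lemma HS0 : 0 \in S.
Proof. by case: Hpar. Qed.

Lemma negD (X : {set 'Z_m}) c : (forall x, x \in X -> - x \in X) ->
  forall x, x \in X :\: [set c; - c] -> - x \in X :\: [set c; - c].
Proof.
move=> hX x; rewrite !inE => /andP [hc hx]; rewrite hX // andbT.
move: hc; apply: contra => /orP [/eqP h|/eqP h]; apply/orP.
  by right; rewrite -h opprK.
by left; rewrite -(opprK x) h opprK.
Qed.

Lemma Hsym : symmetric H.
Proof. apply: adj_sym; apply: negD; [exact: HR | exact: HT]. Qed.

Lemma HG : subrel H G.
Proof.
by case=> i; case=> j //=; rewrite inE => /andP [].
Qed.

Lemma Huv j : H (inl j) (inr j).
Proof. by rewrite /= subrr HS0. Qed.

Lemma Hshift z w s : H (shift z s) (shift w s) = H z w.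
Proof. exact: adj_shift. Qed.
Lemma Gshift z w s : G (shift z s) (shift w s) = G z w.
Proof. exact: adj_shift. Qed.

Definition L0 : {set 'Z_m} := [set j | connect H (inl 0) (inl j)].

Lemma Hconnect_sym : connect_sym H.
Proof. exact: (sym_connect_sym Hsym). Qed.

Lemma comp_mem s z : (z \in component H (inl s)) = (idx z - s \in L0).
Proof.
have key j : connect H (inl s) (inl j) = connect H (inl 0) (inl (j - s)).
  apply/idP/idP => h.
    by have := @connect_shift m H _ _ (- s) (fun z w => Hshift z w (- s)) h => /=; rewrite subrr.
  by have := @connect_shift m H _ _ s (fun z w => Hshift z w s) h => /=; rewrite add0r subrK.
rewrite !inE; case: z => j /=; rewrite -key //.
apply/idP/idP => h.
  apply: connect_trans h _; rewrite Hconnect_sym; exact: connect1 (Huv j).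
by apply: connect_trans h (connect1 (Huv j)).
Qed.


Lemma L00 : 0 \in L0.
Proof. by rewrite inE connect0. Qed.

Lemma LB0 x y : x \in L0 -> y \in L0 -> x - y \in L0.
Proof.
move=> hx hy; rewrite -(comp_mem y (inl x)) inE; move: hx hy; rewrite !inE => hx hy.
by apply: connect_trans hx; rewrite Hconnect_sym.
Qed.

Lemma HNm (x : 'Z_m) : x *+ m = 0.
Proof. by rewrite -mulr_natr pchar_Zp // mulr0. Qed.
Lemma HN0m : (0 < m)%N.
Proof. by apply: ltnW. Qed.

Let Lp : pred 'Z_m := fun x => x \in L0.

Lemma Lp_eq x y : x = y -> Lp x -> Lp y.
Proof. by move=> ->. Qed.

Lemma H_idx w w' : connect H w w' -> idx w' - idx w \in L0.
Proof.
move=> c; rewrite -comp_mem inE; apply: connect_trans c.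
have := comp_mem (idx w) w; rewrite subrr L00 inE; exact.
Qed.

Lemma Hspan x : exists n1 n2, Lp (x - (a *+ n1 + b *+ n2)).
Proof.
suff gen : forall p w, (exists n1 n2, Lp (idx w - (a *+ n1 + b *+ n2))) ->
    path G w p -> exists n1 n2, Lp (idx (last w p) - (a *+ n1 + b *+ n2)).
  have /connectP [p pth ep] := Hconn (inl 0) (inl x).
  have := gen p (inl 0); rewrite -ep /=; apply => //.
  by exists 0%N, 0%N; rewrite !mulr0n addr0 subrr /Lp L00.
have LDp := LD (L := Lp) L00 LB0.
elim=> [|w' p IH] w [n1 [n2 hw]]; first by move=> _; exists n1, n2.
move=> /= /andP [gw pth]; apply: IH pth.
case Hw : (H w w').
  exists n1, n2; have := LDp _ _ (H_idx (connect1 Hw)) hw.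
  by rewrite addrA subrK.
have hneg : - a = a *+ m.-1.
  by have := oppr_mulrn HNm HN0m a 1; rewrite mul1n.
have hnegb : - b = b *+ m.-1.
  by have := oppr_mulrn HNm HN0m b 1; rewrite mul1n.
move: gw Hw; case: w hw => i /=; case: w' => j /=; rewrite ?inE => hw hG; rewrite hG ?andbT //.
- move=> /negbFE /orP [] /eqP hj.
    exists n1.+1, n2; move: hw; rewrite /Lp.
    have -> : j = i + a by rewrite -hj addrC subrK.
    by apply: Lp_eq; rewrite mulrS; ring.
  exists (n1 + m.-1)%N, n2; move: hw; rewrite /Lp.
  have -> : j = i - a by rewrite -hj addrC subrK.
  by apply: Lp_eq; rewrite mulrnDr -hneg; ring.
- move=> /negbFE /orP [] /eqP hj.
    exists n1, n2.+1; move: hw; rewrite /Lp.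
    have -> : j = i + b by rewrite -hj addrC subrK.
    by apply: Lp_eq; rewrite mulrS; ring.
  exists n1, (n2 + m.-1)%N; move: hw; rewrite /Lp.
  have -> : j = i - b by rewrite -hj addrC subrK.
  by apply: Lp_eq; rewrite mulrnDr -hnegb; ring.
Qed.

Let repM := rep (L := Lp) a b HNm HN0m L00.
Let kM := kk (L := Lp) a b HNm HN0m L00.
Let naM := na (L := Lp) a HNm HN0m L00.

Definition pos (z : V) : nat := find (fun i => Lp (idx z - repM i)) (iota 0 kM).

Lemma pos_has z : has (fun i => Lp (idx z - repM i)) (iota 0 kM).
Proof.
have [i [ik hi]] := rep_cover HNm HN0m L00 LB0 Hspan (idx z).
by apply/hasP; exists i => //; rewrite mem_iota.
Qed.

Lemma pos_lt z : (pos z < kM)%N.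
Proof. by have := pos_has z; rewrite has_find size_iota. Qed.

Lemma pos_spec z : Lp (idx z - repM (pos z)).
Proof.
have := nth_find 0%N (pos_has z); rewrite nth_iota ?add0n //; exact: pos_lt.
Qed.

Lemma pos_uniq z i : (i < kM)%N -> Lp (idx z - repM i) -> pos z = i.
Proof.
move=> ik hi; apply: (rep_inj LB0 (pos_lt z) ik).
have := LB0 hi (pos_spec z).
by have -> : idx z - repM i - (idx z - repM (pos z)) = repM (pos z) - repM i by ring.
Qed.

Variable c0 : seq V.
Hypotheses (Hc0 : ham_cycle_on H (component H (inl 0)) c0)
  (Hcnt : (2 <= count (@outer_edge m) (cycle_edges c0))%N).

Lemma mem_c0 z : (z \in c0) = (idx z \in L0).
Proof.
case: Hc0 => _ _ _ hs.
by have := congr1 (fun A : {set V} => z \in A) hs; rewrite /= inE comp_mem subr0.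
Qed.

Lemma uniq_c0 : uniq c0. Proof. by case: Hc0. Qed.
Lemma cycle_c0 : cycle H c0. Proof. by case: Hc0. Qed.

Definition cyc (i : nat) := if odd i then rev c0 else c0.
Lemma uniq_cyc i : uniq (cyc i).
Proof. by rewrite /cyc; case: ifP; rewrite ?rev_uniq uniq_c0. Qed.
Lemma mem_cyc i z : (z \in cyc i) = (z \in c0).
Proof. by rewrite /cyc; case: ifP; rewrite ?mem_rev. Qed.
Lemma cycle_cyc i : cycle H (cyc i).
Proof.
rewrite /cyc; case: ifP => _; last exact: cycle_c0.
rewrite rev_cycle; apply: sub_cycle cycle_c0 => x y; by rewrite Hsym.
Qed.

Definition s0f (z : V) : V :=
  shift (next (cyc (pos z)) (shift z (- repM (pos z)))) (repM (pos z)).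

Lemma unshift_mem z : shift z (- repM (pos z)) \in c0.
Proof. by rewrite mem_c0 idx_shift; exact: pos_spec. Qed.

Lemma pos_shift u i : u \in c0 -> (i < kM)%N -> pos (shift u (repM i)) = i.
Proof.
by move=> uc ik; apply: pos_uniq => //; rewrite /Lp idx_shift addrK -mem_c0.
Qed.

Lemma s0_shift u i : u \in c0 -> (i < kM)%N ->
  s0f (shift u (repM i)) = shift (next (cyc i) u) (repM i).
Proof. by move=> uc ik; rewrite /s0f pos_shift // shiftK. Qed.

Lemma pos_s0 z : pos (s0f z) = pos z.
Proof.
by rewrite /s0f pos_shift ?pos_lt // -(mem_cyc (pos z)) mem_next mem_cyc unshift_mem.
Qed.

Lemma s0_inj : injective s0f.
Proof.
move=> z w e; have pe : pos z = pos w by rewrite -pos_s0 e pos_s0.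
move: e; rewrite /s0f pe => /shift_inj /(can_inj (prev_next (uniq_cyc _))) /shift_inj.
done.
Qed.

Definition s0 : {perm V} := perm s0_inj.

Lemma s0_edge z : G z (s0 z).
Proof.
rewrite permE /s0f -{1}(shiftKN (repM (pos z)) z) Gshift; apply: HG.
by apply: next_cycle (cycle_cyc _) _; rewrite mem_cyc unshift_mem.
Qed.

Lemma pos_s0p z : pos (s0 z) = pos z.
Proof. by rewrite permE pos_s0. Qed.

Lemma iter_s0 i n u : u \in c0 -> (i < kM)%N ->
  iter n s0 (shift u (repM i)) = shift (iter n (next (cyc i)) u) (repM i).
Proof.
move=> uc ik; elim: n => [|n IH] //=; rewrite IH permE s0_shift //.
elim: n {IH} => [|n IH] //=; by rewrite -(mem_cyc i) mem_next mem_cyc.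
Qed.

Lemma s0_fib z w : pos z = pos w -> fconnect s0 z w.
Proof.
move=> pzw.
set i := pos z; set u := shift z (- repM i); set u' := shift w (- repM i).
have uc : u \in c0 by exact: unshift_mem.
have uc' : u' \in c0 by rewrite /u' /i pzw; exact: unshift_mem.
have c : fconnect (next (cyc i)) u u'.
  by rewrite (fconnect_cycle (cycle_next (uniq_cyc i))) ?mem_cyc.
rewrite -(shiftKN (repM i) z) -(shiftKN (repM i) w) -/u -/u' -(iter_findex c).
rewrite -iter_s0 //; [exact: fconnect_iter | exact: pos_lt].
Qed.

Definition isl (z : V) := if z is inl _ then true else false.
Definition swapv (z : V) : V := match z with inl x => inr x | inr x => inl x end.
Lemma swapvK : involutive swapv. Proof. by case. Qed.

Lemma count_isl_c0 : count isl c0 = count (predC isl) c0.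
Proof.
have U := uniq_c0.
have pe : perm_eq c0 (map swapv c0).
  apply: uniq_perm => //; first by rewrite map_inj_uniq //; exact: inv_inj swapvK.
  move=> z; rewrite -{2}(swapvK z) (mem_map (inv_inj swapvK)) !mem_c0; by case: z.
rewrite (seq.permP pe) count_map; apply: eq_count; by case.
Qed.

Definition outer2 (p : V * V) := isl p.1 && isl p.2.
Definition inner2 (p : V * V) := ~~ isl p.1 && ~~ isl p.2.

Lemma count_inner_outer : count inner2 (cycle_edges c0) = count outer2 (cycle_edges c0).
Proof.
set l := cycle_edges c0.
have sz : size (rot 1 c0) = size c0 by rewrite size_rot.
have c1 : count (fun p => isl p.1) l = count isl c0.
  by rewrite -(count_map fst isl) -/(unzip1 _) unzip1_zip // sz.
have c2 : count (fun p => isl p.2) l = count isl c0.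
  rewrite -(count_map snd isl) -/(unzip2 _) unzip2_zip ?sz //.
  by rewrite (seq.permP (etrans (perm_rot 1 c0 c0) (perm_refl c0))).
have c1' : count (fun p => ~~ isl p.1) l = count (predC isl) c0.
  by rewrite -(count_map fst (predC isl)) -/(unzip1 _) unzip1_zip // sz.
have c2' : count (fun p => ~~ isl p.2) l = count (predC isl) c0.
  rewrite -(count_map snd (predC isl)) -/(unzip2 _) unzip2_zip ?sz //.
  by rewrite (seq.permP (etrans (perm_rot 1 c0 c0) (perm_refl c0))).
have e1 := count_split (fun p : V * V => isl p.1) (fun p => isl p.2) l.
have e2 := count_split (fun p : V * V => ~~ isl p.1) (fun p => isl p.2) l.
have e3 := count_split (fun p : V * V => isl p.2) (fun p => isl p.1) l.
have e4 := count_split (fun p : V * V => ~~ isl p.2) (fun p => isl p.1) l.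
have s1 : count (fun p : V * V => isl p.2 && isl p.1) l = count outer2 l.
  by apply: eq_count => p; rewrite /outer2 andbC.
have s2 : count (fun p : V * V => ~~ isl p.2 && ~~ isl p.1) l = count inner2 l.
  by apply: eq_count => p; rewrite /inner2 andbC.
have s3 : count (fun p : V * V => isl p.2 && ~~ isl p.1) l =
          count (fun p : V * V => ~~ isl p.1 && isl p.2) l.
  by apply: eq_count => p; rewrite andbC.
have s4 : count (fun p : V * V => ~~ isl p.2 && isl p.1) l =
          count (fun p : V * V => isl p.1 && ~~ isl p.2) l.
  by apply: eq_count => p; rewrite andbC.
have := count_isl_c0.
rewrite /outer2 /inner2 in s1 s2 *.
lia.
Qed.

Lemma outer2E p : outer_edge p = outer2 p.
Proof. by case: p => [[x|x] [y|y]]. Qed.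

Lemma two_edges (Pl : bool) :
  (2 <= count (fun p => if Pl then outer2 p else inner2 p) (cycle_edges c0))%N ->
  exists w1 w2, [/\ w1 \in c0, w2 \in c0, w1 != w2,
     isl w1 = Pl /\ isl (next c0 w1) = Pl & isl w2 = Pl /\ isl (next c0 w2) = Pl].
Proof.
rewrite /cycle_edges zip_rot_next ?uniq_c0 // count_map => /(two_of_count uniq_c0).
have gen w : (if Pl then outer2 (w, next c0 w) else inner2 (w, next c0 w)) ->
    isl w = Pl /\ isl (next c0 w) = Pl.
  by rewrite /outer2 /inner2 /=; case: Pl; case: (isl w); case: (isl (next c0 w)).
move=> [w1 [w2 [h1 h2 h3 h4 h5]]]; exists w1, w2; split => //; exact: gen.
Qed.

Lemma Gsame w s d : (isl w -> d \in R /\ - d \in R) -> (~~ isl w -> d \in T /\ - d \in T) ->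
  G (shift w s) (shift w (s + d)) /\ G (shift w (s + d)) (shift w s).
Proof.
case: w => x /= h1 h2.
  have [hd hnd] := h1 isT.
  have e1 : x + (s + d) - (x + s) = d by ring.
  have e2 : x + s - (x + (s + d)) = - d by ring.
  by rewrite e1 e2.
have [hd hnd] := h2 isT.
have e1 : x + (s + d) - (x + s) = d by ring.
have e2 : x + s - (x + (s + d)) = - d by ring.
by rewrite e1 e2.
Qed.

Lemma step_d i : (i.+1 < kM)%N -> exists d, repM i.+1 = repM i + d /\
  (forall w, isl w = ~~ (naM %| i.+1)%N ->
     (isl w -> d \in R /\ - d \in R) /\ (~~ isl w -> d \in T /\ - d \in T)).
Proof.
move=> ik; have [hb ha] := rep_step ik.
case hdv : (naM %| i.+1)%N.
  exists b; split; first exact: hb.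
  by move=> w ->; split => // _; split => //; apply: HT.
have [h|h] := ha (negbT hdv).
  exists a; split => // w ->; split => // _; split => //; exact: HR.
exists (- a); split => // w ->; split => // _; rewrite opprK; split => //; exact: HR.
Qed.

Section Gadgets.
Variables (e1 e2 f1 f2 : V).
Hypotheses
  (He : [/\ e1 \in c0, e2 \in c0, e1 != e2, isl e1 = true /\ isl (next c0 e1) = true &
          isl e2 = true /\ isl (next c0 e2) = true])
  (Hf : [/\ f1 \in c0, f2 \in c0, f1 != f2, isl f1 = false /\ isl (next c0 f1) = false &
          isl f2 = false /\ isl (next c0 f2) = false]).

Definition Wt i := if (naM %| i.+1)%N then (if odd i then f2 else f1) else (if odd i then e2 else e1).
Definition Wh i := next c0 (Wt i).
Definition xg i := shift (if odd i then Wh i else Wt i) (repM i).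
Definition yg i := shift (if odd i then Wt i else Wh i) (repM i.+1).

Lemma Wt_mem i : Wt i \in c0.
Proof. by case: He Hf => ? ? _ _ _ [? ? _ _ _]; rewrite /Wt; do 2 case: ifP. Qed.
Lemma Wh_mem i : Wh i \in c0.
Proof. by rewrite /Wh mem_next Wt_mem. Qed.
Lemma isl_Wt i : isl (Wt i) = ~~ (naM %| i.+1)%N.
Proof.
by case: He Hf => _ _ _ [? _] [? _] [_ _ _ [? _] [? _]]; rewrite /Wt; do 2 case: ifP.
Qed.
Lemma isl_Wh i : isl (Wh i) = ~~ (naM %| i.+1)%N.
Proof.
by case: He Hf => _ _ _ [_ ?] [_ ?] [_ _ _ [_ ?] [_ ?]]; rewrite /Wh /Wt; do 2 case: ifP.
Qed.

Lemma next_rev_c0 u : next (rev c0) (next c0 u) = u.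
Proof. by rewrite next_rev ?uniq_c0 // prev_next // uniq_c0. Qed.

Lemma s0_xg i : (i < kM)%N -> s0 (xg i) = shift (if odd i then Wt i else Wh i) (repM i).
Proof.
move=> ik; rewrite permE /xg; case: ifP => o; rewrite s0_shift ?Wt_mem ?Wh_mem // /cyc o //.
by rewrite next_rev_c0.
Qed.

Lemma s0_yg i : (i.+1 < kM)%N -> s0 (yg i) = shift (if odd i then Wh i else Wt i) (repM i.+1).
Proof.
move=> ik; rewrite permE /yg; case: ifP => o; rewrite s0_shift ?Wt_mem ?Wh_mem // /cyc /= o //=.
by rewrite next_rev_c0.
Qed.

Lemma gadget_edges i : (i.+1 < kM)%N -> G (xg i) (s0 (yg i)) /\ G (yg i) (s0 (xg i)).
Proof.
move=> ik; rewrite s0_xg ?s0_yg //; last by lia.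
have [d [hd hw]] := step_d ik; rewrite /xg /yg hd.
have [h1 h2] := hw _ (isl_Wt i); have [h3 h4] := hw _ (isl_Wh i).
have [g1 g2] := Gsame (repM i) h1 h2; have [g3 g4] := Gsame (repM i) h3 h4.
by case: ifP.
Qed.

Lemma gadget_distinct i : (i.+2 < kM)%N -> xg i.+1 != yg i.
Proof.
move=> ik; apply/negP => /eqP; rewrite /xg /yg => /shift_inj.
case: He Hf => _ _ ne _ _ [_ _ nf _ _].
have ni : forall u v, u \in c0 -> v \in c0 -> next c0 u = next c0 v -> u = v.
  by move=> u v _ _ /(can_inj (prev_next uniq_c0)).
case di : (naM %| i.+1)%N; case dj : (naM %| i.+2)%N.
- rewrite /Wh /Wt di dj /=; case: (odd i) => /= h.
    by move: nf; rewrite h eqxx.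
  by move: nf; rewrite (ni _ _ _ _ h) ?eqxx //; case: Hf.
- move=> h; have := congr1 isl h.
  by case: (odd i.+1); case: (odd i); rewrite ?isl_Wt ?isl_Wh di dj.
- move=> h; have := congr1 isl h.
  by case: (odd i.+1); case: (odd i); rewrite ?isl_Wt ?isl_Wh di dj.
- rewrite /Wh /Wt di dj /=; case: (odd i) => /= h.
    by move: ne; rewrite h eqxx.
  by move: ne; rewrite (ni _ _ _ _ h) ?eqxx //; case: He.
Qed.

Lemma ham_gadgets : hamiltonian G.
Proof.
have kpos : (0 < kM)%N by have := pos_lt (inl 0); lia.
have Hx : forall i, (i.+1 < kM)%N -> pos (xg i) = i.
  by move=> i ik; rewrite /xg; case: ifP => _; apply: pos_shift; rewrite ?Wt_mem ?Wh_mem //; lia.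
have Hy : forall i, (i.+1 < kM)%N -> pos (yg i) = i.+1.
  by move=> i ik; rewrite /yg; case: ifP => _; apply: pos_shift; rewrite ?Wt_mem ?Wh_mem.
have [s [se sc]] := merge_all kpos pos_lt s0_edge pos_s0p s0_fib Hx Hy gadget_edges gadget_distinct.
exists (orbit s (inl 0)); split.
- exact: orbit_uniq.
- rewrite size_orbit /order.
  have -> : #|fconnect s (inl 0)| = #|V| by apply: eq_card => z; rewrite !inE sc.
  rewrite card_sum card_ord Zp_cast //; lia.
- apply: sub_cycle (cycle_orbit (@perm_inj _ s) (inl 0)) => x y /eqP <-; exact: se.
- by apply/setP => z; rewrite !inE -fconnect_orbit sc.
Qed.

End Gadgets.

Lemma ham_main : hamiltonian G.
Proof.
have ho : (2 <= count (fun p => if true then outer2 p else inner2 p) (cycle_edges c0))%N.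
  by apply: leq_trans Hcnt _; rewrite (eq_count outer2E).
have hi : (2 <= count (fun p => if false then outer2 p else inner2 p) (cycle_edges c0))%N.
  by apply: leq_trans Hcnt _; rewrite (eq_count outer2E) /= count_inner_outer.
have [e1 [e2 He]] := @two_edges true ho.
have [f1 [f2 Hf]] := @two_edges false hi.
exact: ham_gadgets He Hf.
Qed.

End Main.


Theorem lemma3p4 (m : nat) (R S T : {set 'Z_m}) (a b : 'Z_m) :
  (1 < m)%N ->
  bicirc_params R S T ->
  connected_graph (bicirc_adj R S T) ->
  (4 <= #|R| + #|S|)%N ->
  (3 <= #|R|)%N -> (3 <= #|T|)%N ->
  a \in R -> b \in T ->
  ((nat_of_ord a).*2 != m)%N -> ((nat_of_ord b).*2 != m)%N ->
  (forall x : vtx m,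
     let H := bicirc_adj (R :\: [set a; - a]) S (T :\: [set b; - b]) in
     exists c : seq (vtx m),
       ham_cycle_on H (component H x) c /\
       (2 <= count (@outer_edge m) (cycle_edges c))%N) ->
  hamiltonian (bicirc_adj R S T).
Proof.
move=> m1 Hpar Hconn _ _ _ Ha Hb _ _ Hc.
have [c0 [Hc0 Hcnt]] := Hc (inl 0).
exact: (ham_main m1 Hpar Hconn Ha Hb Hc0 Hcnt).
Qed.
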